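(* Let $(X,\le)$ be a bicontinuous poset and let $C\subseteq X$ be a countable subset that is dense in the interval topology. Then: (i) the collection $\{(a,b): a,b\in C,\ a\ll b\}$ is a countable basis for the interval topology; thus separability of the interval topology implies second countability, and even complete metrizability if $X$ is globally hyperbolic; (ii) for every $x\in X$, the set $\Downarrow x\cap C$ contains a directed set with supremum $x$, and $\Uparrow x\cap C$ contains a filtered set with infimum $x$.
   Context: For a poset $(P,\sqsubseteq)$: a nonempty $S\subseteq P$ is directed if any two elements of $S$ have an upper bound in $S$, and filtered if any two elements of $S$ have a lower bound in $S$; $\bigsqcup S$ and $\bigwedge S$ denote supremum and infimum when they exist. For $x,y\in P$, $x\ll y$ iff for every directed $S\subseteq P$ that has a supremum, $y\sqsubseteq\bigsqcup S$ implies $x\sqsubseteq s$ for some $s\in S$. Put $\Downarrow x=\{a: a\ll x\}$, $\Uparrow x=\{a: x\ll a\}$. A basis of $P$ is a subset $B$ such that for every $x$, $B\cap\Downarrow x$ contains a directed set with supremum $x$; $P$ is continuous if it has a basis. A continuous poset $P$ is bicontinuous if (1) for all $x,y$: $x\ll y$ iff for every filtered $S\subseteq P$ having an infimum, $\bigwedge S\sqsubseteq x$ implies $s\sqsubseteq y$ for some $s\in S$; and (2) for every $x$, $\Uparrow x$ is filtered with infimum $x$. On a bicontinuous poset the sets $(a,b)=\{x: a\ll x\ll b\}$ form a basis for a topology, the interval topology. A globally hyperbolic poset is a bicontinuous poset $(X,\le)$ in which every closed interval $[a,b]=\{x: a\le x\le b\}$ is compact in the interval topology. *)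

(* Defs.v *)
From Stdlib Require Import Reals List.
Open Scope R_scope.

Definition countable {T : Type} (A : T -> Prop) : Prop :=
  exists f : T -> nat, forall x y, A x -> A y -> f x = f y -> x = y.

Section MetricDefs.
Context {X : Type} (d : X -> X -> R).
Definition is_metric : Prop :=
  (forall x y, 0 <= d x y) /\ (forall x y, d x y = 0 <-> x = y) /\
  (forall x y, d x y = d y x) /\ (forall x y z, d x z <= d x y + d y z).
Definition metric_open (U : X -> Prop) : Prop :=
  forall x, U x -> exists eps, 0 < eps /\ forall y, d x y < eps -> U y.
Definition metric_cauchy (u : nat -> X) : Prop :=
  forall eps, 0 < eps -> exists N, forall m n, (N <= m)%nat -> (N <= n)%nat ->
    d (u m) (u n) < eps.
Definition metric_complete : Prop :=
  forall u : nat -> X, metric_cauchy u ->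
    exists l, forall eps, 0 < eps -> exists N, forall n, (N <= n)%nat -> d (u n) l < eps.
End MetricDefs.

Section PosetDefs.
Context {X : Type} (le : X -> X -> Prop).

Definition is_poset : Prop :=
  (forall x, le x x) /\
  (forall x y, le x y -> le y x -> x = y) /\
  (forall x y z, le x y -> le y z -> le x z).

Definition subset (A B : X -> Prop) : Prop := forall x, A x -> B x.

Definition directed (S : X -> Prop) : Prop :=
  (exists s, S s) /\
  (forall x y, S x -> S y -> exists z, S z /\ le x z /\ le y z).

Definition filtered (S : X -> Prop) : Prop :=
  (exists s, S s) /\
  (forall x y, S x -> S y -> exists z, S z /\ le z x /\ le z y).

Definition is_sup (S : X -> Prop) (s : X) : Prop :=
  (forall x, S x -> le x s) /\ (forall u, (forall x, S x -> le x u) -> le s u).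

Definition is_inf (S : X -> Prop) (i : X) : Prop :=
  (forall x, S x -> le i x) /\ (forall l, (forall x, S x -> le l x) -> le l i).

Definition way_below (x y : X) : Prop :=
  forall S s, directed S -> is_sup S s -> le y s -> exists z, S z /\ le x z.

Definition ddown (x : X) : X -> Prop := fun a => way_below a x.
Definition uup (x : X) : X -> Prop := fun a => way_below x a.

Definition is_basis (B : X -> Prop) : Prop :=
  forall x, exists S, subset S (fun a => B a /\ ddown x a) /\
                      directed S /\ is_sup S x.

Definition continuous_poset : Prop := exists B, is_basis B.

Definition bicontinuous : Prop :=
  continuous_poset /\
  (forall x y, way_below x y <->
     (forall S i, filtered S -> is_inf S i -> le i x -> exists s, S s /\ le s y)) /\
  (forall x, filtered (uup x) /\ is_inf (uup x) x).

Definition interval_oo (a b : X) : X -> Prop :=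
  fun x => way_below a x /\ way_below x b.

Definition interval_cc (a b : X) : X -> Prop :=
  fun x => le a x /\ le x b.

Definition interval_open (U : X -> Prop) : Prop :=
  forall x, U x -> exists a b, interval_oo a b x /\ subset (interval_oo a b) U.

Definition interval_dense (D : X -> Prop) : Prop :=
  forall U, interval_open U -> (exists x, U x) -> exists x, U x /\ D x.

Definition interval_compact (K : X -> Prop) : Prop :=
  forall F : (X -> Prop) -> Prop,
    (forall U, F U -> interval_open U) ->
    (forall x, K x -> exists U, F U /\ U x) ->
    exists l : list (X -> Prop),
      (forall U, In U l -> F U) /\ (forall x, K x -> exists U, In U l /\ U x).

Definition globally_hyperbolic : Prop :=
  bicontinuous /\ (forall a b, interval_compact (interval_cc a b)).

Definition is_topological_basis (B : (X -> Prop) -> Prop) : Prop :=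
  (forall U, B U -> interval_open U) /\
  (forall U, interval_open U ->
     forall x, U x -> exists V, B V /\ V x /\ subset V U).

Definition second_countable : Prop :=
  exists B : (X -> Prop) -> Prop,
    countable B /\ is_topological_basis B.

Definition interval_completely_metrizable : Prop :=
  exists d : X -> X -> R,
    is_metric d /\
    (forall U, interval_open U <-> metric_open d U) /\
    metric_complete d.
End PosetDefs.

(* Main.v *)
Require Import Defs.
From Stdlib Require Import Reals List Lra Lia Classical ClassicalEpsilon ZArith.
From Stdlib Require Cantor.
Open Scope R_scope.


Lemma sup_ex (E : R -> Prop) : exists m : R, (bound E /\ exists x, E x) -> is_lub E m.
Proof.
  destruct (classic (bound E /\ exists x, E x)) as [[Hb He]|Hn].
  - destruct (completeness E Hb He) as [m Hm]. exists m; auto.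
  - exists 0; tauto.
Qed.
Definition supR (E : R -> Prop) : R := proj1_sig (constructive_indefinite_description _ (sup_ex E)).
Lemma supR_spec E : bound E -> (exists x, E x) -> is_lub E (supR E).
Proof. intros. unfold supR. destruct constructive_indefinite_description; simpl; auto. Qed.
Lemma supR_ub E r B : (forall x, E x -> x <= B) -> E r -> r <= supR E.
Proof. intros HB Hr. destruct (supR_spec E) as [H _]; eauto. exists B; exact HB. Qed.
Lemma supR_le E r B : (forall x, E x -> x <= B) -> E r -> supR E <= B.
Proof. intros HB Hr. destruct (supR_spec E) as [_ H]; eauto. exists B; exact HB. Qed.

Lemma pow2_pos n : 0 < 2 ^ n. Proof. apply pow_lt; lra. Qed.

Lemma INR_le_pow2 n : INR n <= 2 ^ n.
Proof. induction n. simpl; lra. rewrite S_INR. simpl. assert (1 <= 2^n) by (clear; induction n; simpl; lra). lra. Qed.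

Lemma small_pow2 eps : 0 < eps -> exists n, 2 / 2 ^ n < eps.
Proof.
  intros He. destruct (archimed (2 / eps)) as [H _].
  assert (Hz : (0 <= up (2/eps))%Z).
  { apply le_IZR. assert (0 < 2/eps) by (apply Rdiv_lt_0_compat; lra). lra. }
  exists (Z.to_nat (up (2/eps))).
  pose proof (INR_le_pow2 (Z.to_nat (up (2/eps)))) as Hp.
  rewrite INR_IZR_INZ, Z2Nat.id in Hp by auto.
  pose proof (pow2_pos (Z.to_nat (up (2/eps)))).
  apply (Rmult_lt_reg_r (2 ^ Z.to_nat (up (2/eps)) / eps)).
  apply Rdiv_lt_0_compat; lra.
  replace (2 / 2 ^ Z.to_nat (up (2 / eps)) * (2 ^ Z.to_nat (up (2 / eps)) / eps)) with (2/eps) by (field; lra).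
  replace (eps * (2 ^ Z.to_nat (up (2 / eps)) / eps)) with (2 ^ Z.to_nat (up (2 / eps))) by (field; lra).
  lra.
Qed.

Lemma floor_dy t n : 0 <= t -> exists k, INR k / 2 ^ n <= t < INR (S k) / 2 ^ n.
Proof.
  intros Ht. pose proof (pow2_pos n) as Hpn.
  destruct (archimed (t * 2 ^ n)) as [H _].
  assert (Hz : (0 <= up (t*2^n))%Z).
  { apply le_IZR. assert (0 <= t*2^n) by (apply Rmult_le_pos; lra). lra. }
  assert (HK : t < INR (Z.to_nat (up (t*2^n))) / 2 ^ n).
  { rewrite INR_IZR_INZ, Z2Nat.id by auto. apply (Rmult_lt_reg_r (2^n)); auto.
    field_simplify; lra. }
  revert HK. generalize (Z.to_nat (up (t*2^n))). intros K. induction K; intros HK.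
  - simpl in HK. unfold Rdiv in HK. rewrite Rmult_0_l in HK. lra.
  - destruct (Rlt_dec t (INR K / 2^n)) as [h|h]. auto. exists K; split; lra.
Qed.


Section Generic.
Variables (X : Type) (le wb : X -> X -> Prop).
Hypothesis Gtr : forall x y z, le x y -> le y z -> le x z.
Hypothesis G1 : forall a b, wb a b -> le a b.
Hypothesis G2l : forall a b c, le a b -> wb b c -> wb a c.
Hypothesis G2r : forall a b c, wb a b -> le b c -> wb a c.
Hypothesis G3 : forall a b, wb a b -> exists c, wb a c /\ wb c b.
Hypothesis G4 : forall x q, ~ le x q -> exists a, wb a x /\ ~ le a q.
Hypothesis G5 : forall a1 a2 x, wb a1 x -> wb a2 x -> exists a, wb a x /\ le a1 a /\ le a2 a.
Hypothesis G6 : forall c1 c2 x, wb x c1 -> wb x c2 -> exists c, wb x c /\ le c c1 /\ le c c2.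
Hypothesis G7 : forall x, exists a, wb a x.
Hypothesis G8 : forall x, exists c, wb x c.

Definition near (P : X -> Prop) (x : X) : Prop :=
  exists a c, wb a x /\ wb x c /\ forall z, wb a z -> wb z c -> P z.

Lemma near_and P P' x : near P x -> near P' x -> near (fun z => P z /\ P' z) x.
Proof.
  intros [a1 [c1 [h1 [h2 h3]]]] [a2 [c2 [k1 [k2 k3]]]].
  destruct (G5 a1 a2 x h1 k1) as [a [ha [ha1 ha2]]].
  destruct (G6 c1 c2 x h2 k2) as [c [hc [hc1 hc2]]].
  exists a, c; split; [|split]; auto.
  intros z hz1 hz2; split; [apply h3|apply k3]; eauto.
Qed.

Lemma near_impl (P P' : X -> Prop) x : (forall z, P z -> P' z) -> near P x -> near P' x.
Proof. intros H [a [c [h1 [h2 h3]]]]. exists a, c; eauto. Qed.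

Lemma near_true (P : X -> Prop) x : (forall z, P z) -> near P x.
Proof. intros H. destruct (G7 x) as [a ha]; destruct (G8 x) as [c hc]. exists a, c; auto. Qed.

Definition cont (f : X -> R) x := forall eps, 0 < eps -> near (fun z => Rabs (f z - f x) < eps) x.

Lemma cont_const c x : cont (fun _ => c) x.
Proof. intros e he. apply near_true. intros; rewrite Rminus_diag, Rabs_R0; auto. Qed.

Lemma cont_plus f g x : cont f x -> cont g x -> cont (fun z => f z + g z) x.
Proof.
  intros hf hg e he. eapply near_impl; [|apply near_and; [apply (hf (e/2))|apply (hg (e/2))]]; try lra.
  intros z [h1 h2].
  replace (f z + g z - (f x + g x)) with ((f z - f x) + (g z - g x)) by ring.
  pose proof (Rabs_triang (f z - f x) (g z - g x)). lra.
Qed.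

Lemma cont_scal c f x : cont f x -> cont (fun z => c * f z) x.
Proof.
  intros hf e he. assert (hc : 0 < Rabs c + 1) by (pose proof (Rabs_pos c); lra).
  eapply near_impl; [|apply (hf (e / (Rabs c + 1)))]. 
  2: apply Rdiv_lt_0_compat; lra.
  intros z hz. rewrite <- Rmult_minus_distr_l, Rabs_mult.
  apply Rle_lt_trans with ((Rabs c + 1) * Rabs (f z - f x)).
  apply Rmult_le_compat_r. apply Rabs_pos. lra.
  apply (Rmult_lt_compat_l (Rabs c + 1)) in hz; auto.
  replace ((Rabs c + 1) * (e / (Rabs c + 1))) with e in hz by (field; lra). auto.
Qed.

Lemma cont_mult01 f g x : (forall z, 0 <= f z <= 1) -> (forall z, 0 <= g z <= 1) ->
  cont f x -> cont g x -> cont (fun z => f z * g z) x.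
Proof.
  intros bf bg hf hg e he. eapply near_impl; [|apply near_and; [apply (hf (e/2))|apply (hg (e/2))]]; try lra.
  intros z [h1 h2].
  replace (f z * g z - f x * g x) with (f z * (g z - g x) + g x * (f z - f x)) by ring.
  pose proof (Rabs_triang (f z * (g z - g x)) (g x * (f z - f x))).
  rewrite !Rabs_mult in H.
  assert (Rabs (f z) <= 1) by (rewrite Rabs_right; [apply bf| apply Rle_ge, bf]).
  assert (Rabs (g x) <= 1) by (rewrite Rabs_right; [apply bg| apply Rle_ge, bg]).
  assert (Rabs (f z) * Rabs (g z - g x) <= Rabs (g z - g x)).
  { rewrite <- (Rmult_1_l (Rabs (g z - g x))) at 2. apply Rmult_le_compat_r; auto. apply Rabs_pos. }
  assert (Rabs (g x) * Rabs (f z - f x) <= Rabs (f z - f x)).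
  { rewrite <- (Rmult_1_l (Rabs (f z - f x))) at 2. apply Rmult_le_compat_r; auto. apply Rabs_pos. }
  lra.
Qed.

Lemma Rmax_diff a b c d : Rabs (Rmax a b - Rmax c d) <= Rabs (a - c) + Rabs (b - d).
Proof.
  unfold Rmax; destruct (Rle_dec a b); destruct (Rle_dec c d);
  unfold Rabs; repeat destruct Rcase_abs; lra.
Qed.

Lemma cont_max f g x : cont f x -> cont g x -> cont (fun z => Rmax (f z) (g z)) x.
Proof.
  intros hf hg e he. eapply near_impl; [|apply near_and; [apply (hf (e/2))|apply (hg (e/2))]]; try lra.
  intros z [h1 h2]. pose proof (Rmax_diff (f z) (g z) (f x) (g x)). lra.
Qed.

Lemma cont_absdiff f y x : cont f x -> cont (fun z => Rabs (f z - f y)) x.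
Proof.
  intros hf e he. eapply near_impl; [|apply (hf e he)].
  intros z hz. eapply Rle_lt_trans; [|apply hz].
  replace (f z - f x) with ((f z - f y) - (f x - f y)) by ring.
  apply Rabs_triang_inv2.
Qed.

Lemma cont_ext f g x : (forall z, f z = g z) -> cont f x -> cont g x.
Proof. intros H hf e he. eapply near_impl; [|apply (hf e he)]. intros z. rewrite !H; auto. Qed.

Lemma cont_local f g x : near (fun z => f z = g z) x -> cont f x -> cont g x.
Proof.
  intros hn hf e he. assert (hx : f x = g x).
  { destruct hn as [a [c [h1 [h2 h3]]]]. auto. }
  eapply near_impl; [|apply near_and; [apply hn|apply (hf e he)]].
  intros z [h1 h2]. rewrite <- h1, <- hx; auto.
Qed.

Fixpoint fsum (h : nat -> X -> R) (M : nat) (z : X) : R :=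
  match M with O => 0 | S M => fsum h M z + h M z end.

Lemma cont_fsum h M x : (forall m, cont (h m) x) -> cont (fsum h M) x.
Proof.
  intros H. induction M; simpl. apply cont_const. apply (cont_plus (fsum h M) (h M)); auto.
Qed.

Lemma ip_ex a b : exists c, wb a b -> wb a c /\ wb c b.
Proof. destruct (classic (wb a b)) as [h|h]. destruct (G3 a b h) as [c hc]; eauto. exists a; tauto. Qed.
Definition ip a b : X := proj1_sig (constructive_indefinite_description _ (ip_ex a b)).
Lemma ip_spec a b : wb a b -> wb a (ip a b) /\ wb (ip a b) b.
Proof. unfold ip; destruct constructive_indefinite_description; simpl; auto. Qed.

Local Open Scope nat_scope.
Fixpoint Q (a b : X) (n k : nat) : X :=
  match n with
  | O => match k with O => a | _ => b end
  | S n => if Nat.even k then Q a b n (Nat.div2 k)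
           else ip (Q a b n (Nat.div2 k)) (Q a b n (S (Nat.div2 k)))
  end.

Lemma Q_S a b n k : Q a b (S n) k = if Nat.even k then Q a b n (Nat.div2 k)
           else ip (Q a b n (Nat.div2 k)) (Q a b n (S (Nat.div2 k))).
Proof. reflexivity. Qed.
Lemma Q_double a b n k : Q a b (S n) (2 * k)%nat = Q a b n k.
Proof. rewrite Q_S. rewrite Nat.even_mul. simpl Nat.even. simpl orb. rewrite Nat.div2_double. auto. Qed.
Lemma Q_odd a b n k : Q a b (S n) (S (2 * k)%nat) = ip (Q a b n k) (Q a b n (S k)).
Proof.
  rewrite Q_S. replace (Nat.even (S (2*k)%nat)) with false.
  rewrite Nat.div2_succ_double. auto.
  rewrite Nat.even_succ, Nat.odd_mul. simpl. auto.
Qed.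

Lemma Q_chain a b : wb a b -> forall n k, (k < 2 ^ n)%nat -> wb (Q a b n k) (Q a b n (S k)).
Proof.
  intros hab n. induction n; intros k hk.
  - simpl in hk. assert (k = 0) by lia. subst. simpl. auto.
  - destruct (Nat.Even_or_Odd k) as [[j hj]|[j hj]]; subst k.
    + rewrite Q_double, Q_odd. apply ip_spec. apply IHn. simpl in hk; lia.
    + replace (2 * j + 1)%nat with (S (2 * j)) by lia.
      replace (S (S (2 * j))) with (2 * S j)%nat by lia.
      rewrite Q_double, Q_odd. apply ip_spec. apply IHn. simpl in hk; lia.
Qed.

Lemma Q_lt a b : wb a b -> forall n k1 k2, (k1 < k2)%nat -> (k2 <= 2 ^ n)%nat -> wb (Q a b n k1) (Q a b n k2).
Proof.
  intros hab n k1 k2 h12. induction h12; intros h2.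
  - apply Q_chain; auto; lia.
  - apply G2r with (Q a b n m). apply IHh12; lia. apply G1, Q_chain; auto; lia.
Qed.

Lemma Q_lift a b n m k : Q a b (n + m) (k * 2 ^ m)%nat = Q a b n k.
Proof.
  induction m. simpl. rewrite Nat.add_0_r, Nat.mul_1_r. auto.
  replace (n + S m)%nat with (S (n + m)) by lia.
  replace (k * 2 ^ S m)%nat with (2 * (k * 2 ^ m))%nat by (simpl; lia).
  rewrite Q_double; auto.
Qed.

Lemma Q_mono a b : wb a b -> forall n1 k1 n2 k2, (k1 <= 2 ^ n1)%nat -> (k2 <= 2 ^ n2)%nat ->
  (k1 * 2 ^ n2 < k2 * 2 ^ n1)%nat -> wb (Q a b n1 k1) (Q a b n2 k2).
Proof.
  intros hab n1 k1 n2 k2 h1 h2 h.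
  rewrite <- (Q_lift a b n1 n2 k1), <- (Q_lift a b n2 n1 k2).
  rewrite (Nat.add_comm n2 n1). apply Q_lt; auto.
  rewrite Nat.pow_add_r. nia.
Qed.

Local Open Scope R_scope.
Lemma dy_lt n1 k1 n2 k2 : INR k1 / 2 ^ n1 < INR k2 / 2 ^ n2 -> (k1 * 2 ^ n2 < k2 * 2 ^ n1)%nat.
Proof.
  intros h. apply INR_lt. rewrite !mult_INR, !pow_INR.
  replace (INR 2) with 2 by (simpl; ring).
  pose proof (pow2_pos n1). pose proof (pow2_pos n2).
  replace (INR k1 * 2 ^ n2) with ((INR k1 / 2 ^ n1) * (2 ^ n1 * 2 ^ n2)) by (field; lra).
  replace (INR k2 * 2 ^ n1) with ((INR k2 / 2 ^ n2) * (2 ^ n1 * 2 ^ n2)) by (field; lra).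
  apply Rmult_lt_compat_r; auto. apply Rmult_lt_0_compat; auto.
Qed.

Lemma dy_le1 n k : (k <= 2 ^ n)%nat -> INR k / 2 ^ n <= 1.
Proof.
  intros h. pose proof (pow2_pos n). apply le_INR in h. rewrite pow_INR in h.
  replace (INR 2) with 2 in h by (simpl; ring).
  apply (Rmult_le_reg_r (2^n)); auto. field_simplify; lra.
Qed.

Lemma dy_ge0 n k : 0 <= INR k / 2 ^ n.
Proof. pose proof (pow2_pos n). pose proof (pos_INR k). apply Rmult_le_pos; auto. left; apply Rinv_0_lt_compat; auto. Qed.

Definition Lset a b x : R -> Prop := fun r => r = 0 \/
  exists n k, (k <= 2 ^ n)%nat /\ ~ le x (Q a b n k) /\ r = INR k / 2 ^ n.
Definition ury a b x : R := supR (Lset a b x).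

Lemma Lset_b a b x r : Lset a b x r -> r <= 1.
Proof. intros [h|[n [k [h1 [h2 h3]]]]]; subst. lra. apply dy_le1; auto. Qed.

Lemma ury_ge0 a b x : 0 <= ury a b x.
Proof. apply (supR_ub _ _ 1). apply Lset_b. left; auto. Qed.
Lemma ury_le1 a b x : ury a b x <= 1.
Proof. apply (supR_le _ 0). apply Lset_b. left; auto. Qed.
Lemma ury_01 a b x : 0 <= ury a b x <= 1.
Proof. split; [apply ury_ge0|apply ury_le1]. Qed.

Lemma ury_U3 a b x n k : (k <= 2 ^ n)%nat -> ~ le x (Q a b n k) -> INR k / 2 ^ n <= ury a b x.
Proof. intros. apply (supR_ub _ _ 1). apply Lset_b. right; eauto. Qed.

Lemma ury_U2 a b x n k : wb a b -> (k <= 2 ^ n)%nat -> le x (Q a b n k) -> ury a b x <= INR k / 2 ^ n.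
Proof.
  intros hab hk hx. apply (supR_le _ 0). 2: left; auto.
  intros r [h|[n' [k' [h1 [h2 h3]]]]]; subst. apply dy_ge0.
  apply Rnot_lt_le. intros hlt. apply h2. apply Gtr with (Q a b n k); auto.
  apply G1. apply Q_mono; auto. apply dy_lt; auto.
Qed.

Lemma ury_0 a b x : wb a b -> le x a -> ury a b x = 0.
Proof.
  intros hab h. apply Rle_antisym. 2: apply ury_ge0.
  pose proof (ury_U2 a b x 0 0 hab (Nat.le_0_l _) h). simpl in H. lra.
Qed.

Lemma ury_1 a b x : ~ le x b -> ury a b x = 1.
Proof.
  intros h. apply Rle_antisym. apply ury_le1.
  pose proof (ury_U3 a b x 0 1 (le_n 1) h). simpl in H. lra.
Qed.

Lemma ury_cont a b x : wb a b -> cont (ury a b) x.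
Proof.
  intros hab e he. destruct (small_pow2 e he) as [n hn].
  pose proof (pow2_pos n) as hp.
  set (t := ury a b x).
  destruct (floor_dy t n (ury_ge0 a b x)) as [k [hk1 hk2]].
  assert (Up : exists c, wb x c /\ forall z, wb z c -> ury a b z <= INR (S (S k)) / 2 ^ n).
  { destruct (le_lt_dec (S (S k)) (2 ^ n)) as [hl|hl].
    - assert (le x (Q a b n (S k))).
      { apply NNPP; intro hn'. apply ury_U3 in hn'; [|lia]. fold t in hn'. lra. }
      exists (Q a b n (S (S k))). split. apply G2l with (Q a b n (S k)); auto. apply Q_chain; auto; lia.
      intros z hz. apply ury_U2; auto.
    - destruct (G8 x) as [c hc]. exists c; split; auto. intros z _.
      apply Rle_trans with 1. apply ury_le1.
      apply Nat.lt_le_incl in hl. apply le_INR in hl. rewrite pow_INR in hl. replace (INR 2) with 2 in hl by (simpl; ring).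
      apply (Rmult_le_reg_r (2^n)); auto. field_simplify; try lra. }
  assert (Lo : exists a', wb a' x /\ forall z, wb a' z -> t - 2 / 2 ^ n <= ury a b z).
  { destruct k as [|k].
    - destruct (G7 x) as [a' ha']. exists a'; split; auto. intros z _.
      pose proof (ury_ge0 a b z). simpl in hk2. 
      assert (t - 2/2^n <= 0). { assert (1 / 2^n <= 2/2^n). unfold Rdiv. apply Rmult_le_compat_r. left; apply Rinv_0_lt_compat; auto. lra. lra. } lra.
    - assert (hk : (S k <= 2 ^ n)%nat).
      { apply INR_le. apply (Rmult_le_reg_r (/ 2^n)). apply Rinv_0_lt_compat; auto.
        rewrite pow_INR. replace (INR 2) with 2 by (simpl; ring). rewrite Rinv_r; try lra.
        apply Rle_trans with t; auto. apply ury_le1. }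
      assert (hnx : ~ le x (Q a b n k)).
      { intro h. assert (h' := ury_U2 a b x n k hab ltac:(lia) h). fold t in h'.
        assert (INR k / 2^n < INR (S k) / 2^n). { unfold Rdiv. apply Rmult_lt_compat_r. apply Rinv_0_lt_compat; auto. apply lt_INR; lia. } lra. }
      destruct (G4 x _ hnx) as [a' [ha' hna']]. exists a'; split; auto.
      intros z hz.
      assert (INR k / 2^n <= ury a b z).
      { apply ury_U3; [lia|]. intro h. apply hna'. apply Gtr with z; auto. }
      assert (INR (S (S k)) / 2^n = INR k / 2^n + 2 / 2^n). { rewrite !S_INR. field. lra. }
      lra. }
  destruct Up as [c [hc1 hc2]]. destruct Lo as [a' [ha1 ha2]].
  exists a', c. split; auto. split; auto. intros z hz1 hz2.
  specialize (hc2 z hz2). specialize (ha2 z hz1).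
  assert (INR (S (S k)) / 2^n = INR k / 2^n + 2 / 2^n). { rewrite !S_INR. field. lra. }
  assert (INR (S k) / 2^n = INR k / 2^n + 1 / 2^n). { rewrite !S_INR. field. lra. }
  fold t. apply Rabs_def1; lra.
Qed.

End Generic.


Section Basic.
Variables (X : Type) (le : X -> X -> Prop).
Hypothesis HP : is_poset le.
Hypothesis HB : bicontinuous le.
Let wb := way_below le.

Lemma le_refl x : le x x. Proof. apply HP. Qed.
Lemma le_trans x y z : le x y -> le y z -> le x z. Proof. apply HP. Qed.
Lemma le_antisym x y : le x y -> le y x -> x = y. Proof. apply HP. Qed.

Lemma wb_le a b : wb a b -> le a b.
Proof.
  intros h. destruct (h (fun s => s = b) b) as [z [hz1 hz2]].
  - split. exists b; auto. intros x y hx hy; subst. exists b; repeat split; apply le_refl.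
  - split. intros x hx; subst; apply le_refl. intros u hu. apply hu; auto.
  - apply le_refl.
  - subst; auto.
Qed.

Lemma wb_le_l a b c : le a b -> wb b c -> wb a c.
Proof. intros h1 h2 S s hS hs hc. destruct (h2 S s hS hs hc) as [z [hz1 hz2]]. exists z; split; auto. eapply le_trans; eauto. Qed.

Lemma wb_le_r a b c : wb a b -> le b c -> wb a c.
Proof. intros h1 h2 S s hS hs hc. apply (h1 S s hS hs). eapply le_trans; eauto. Qed.

Lemma down_sup y u : (forall d, wb d y -> le d u) -> le y u.
Proof.
  intros H. destruct HB as [[B hB] _]. destruct (hB y) as [S [hS1 [hS2 hS3]]].
  apply hS3. intros s hs. apply H. apply (hS1 s hs).
Qed.

Lemma up_inf y u : (forall c, wb y c -> le u c) -> le u y.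
Proof.
  intros H. destruct HB as [_ [_ hB]]. destruct (hB y) as [_ [_ h]]. apply h. exact H.
Qed.

Lemma G5c a1 a2 x : wb a1 x -> wb a2 x -> exists a, wb a x /\ le a1 a /\ le a2 a.
Proof.
  intros h1 h2. destruct HB as [[B hB] _]. destruct (hB x) as [S [hS1 [hS2 hS3]]].
  destruct (h1 S x hS2 hS3 (le_refl x)) as [s1 [hs1 hs1']].
  destruct (h2 S x hS2 hS3 (le_refl x)) as [s2 [hs2 hs2']].
  destruct (proj2 hS2 s1 s2 hs1 hs2) as [s [hs [k1 k2]]].
  exists s. split. apply (hS1 s hs). split; eapply le_trans; eauto.
Qed.

Lemma G7c x : exists a, wb a x.
Proof.
  destruct HB as [[B hB] _]. destruct (hB x) as [S [hS1 [[[s hs] _] _]]].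
  exists s. apply (hS1 s hs).
Qed.

Lemma G6c c1 c2 x : wb x c1 -> wb x c2 -> exists c, wb x c /\ le c c1 /\ le c c2.
Proof.
  intros h1 h2. destruct HB as [_ [_ hB]]. destruct (hB x) as [[_ hf] _].
  destruct (hf c1 c2 h1 h2) as [z [hz [k1 k2]]]. exists z; auto.
Qed.

Lemma G8c x : exists c, wb x c.
Proof. destruct HB as [_ [_ hB]]. destruct (hB x) as [[[s hs] _] _]. exists s; auto. Qed.

Lemma G3c a x : wb a x -> exists c, wb a c /\ wb c x.
Proof.
  intros h.
  set (T := fun c => exists d, wb d x /\ wb c d).
  assert (hT : directed le T).
  { split.
    - destruct (G7c x) as [d hd]. destruct (G7c d) as [c hc]. exists c, d; auto.
    - intros c1 c2 [d1 [hd1 hc1]] [d2 [hd2 hc2]].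
      destruct (G5c d1 d2 x hd1 hd2) as [d3 [hd3 [k1 k2]]].
      destruct (G5c c1 c2 d3 (wb_le_r _ _ _ hc1 k1) (wb_le_r _ _ _ hc2 k2)) as [c3 [hc3 [l1 l2]]].
      exists c3; split; auto. exists d3; auto. }
  assert (hs : is_sup le T x).
  { split.
    - intros c [d [hd hc]]. eapply le_trans; apply wb_le; eauto.
    - intros u hu. apply down_sup. intros d hd. apply down_sup. intros c hc. apply hu. exists d; auto. }
  destruct (h T x hT hs (le_refl x)) as [c [[d [hd hc]] hac]].
  exists d; split; auto. eapply wb_le_l; eauto.
Qed.

Lemma G3c' x b : wb x b -> exists c, wb x c /\ wb c b.
Proof.
  intros h.
  set (T := fun c => exists d, wb x d /\ wb d c).
  assert (hT : filtered le T).
  { split.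
    - destruct (G8c x) as [d hd]. destruct (G8c d) as [c hc]. exists c, d; auto.
    - intros c1 c2 [d1 [hd1 hc1]] [d2 [hd2 hc2]].
      destruct (G6c d1 d2 x hd1 hd2) as [d3 [hd3 [k1 k2]]].
      destruct (G6c c1 c2 d3 (wb_le_l _ _ _ k1 hc1) (wb_le_l _ _ _ k2 hc2)) as [c3 [hc3 [l1 l2]]].
      exists c3; split; auto. exists d3; auto. }
  assert (hs : is_inf le T x).
  { split.
    - intros c [d [hd hc]]. eapply le_trans; apply wb_le; eauto.
    - intros u hu. apply up_inf. intros d hd. apply up_inf. intros c hc. apply hu. exists d; auto. }
  destruct HB as [_ [hc1 _]].
  destruct (proj1 (hc1 x b) h T x hT hs (le_refl x)) as [c [[d [hd hc]] hcb]].
  exists d; split; auto. eapply wb_le_r; eauto.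
Qed.

Lemma G4c x q : ~ le x q -> exists a, wb a x /\ ~ le a q.
Proof.
  intros h. apply NNPP. intro hn. apply h. apply down_sup. intros d hd.
  apply NNPP. intro hq. apply hn. exists d; auto.
Qed.

Lemma G4c' x q : ~ le q x -> exists c, wb x c /\ ~ le q c.
Proof.
  intros h. apply NNPP. intro hn. apply h. apply up_inf. intros d hd.
  apply NNPP. intro hq. apply hn. exists d; auto.
Qed.


Ltac gs := first [ exact le_trans | exact wb_le | exact wb_le_l | exact wb_le_r | exact G3c
  | exact G4c | exact G5c | exact G6c | exact G7c | exact G8c ].

Lemma nand P P' x : near X wb P x -> near X wb P' x -> near X wb (fun z => P z /\ P' z) x.
Proof. apply (near_and X le wb); gs. Qed.
Lemma ntrue (P : X -> Prop) x : (forall z, P z) -> near X wb P x.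
Proof. apply (near_true X wb); gs. Qed.
Lemma cplus f g x : cont X wb f x -> cont X wb g x -> cont X wb (fun z => f z + g z) x.
Proof. apply (cont_plus X le wb); gs. Qed.
Lemma cmax f g x : cont X wb f x -> cont X wb g x -> cont X wb (fun z => Rmax (f z) (g z)) x.
Proof. apply (cont_max X le wb); gs. Qed.
Lemma cmult f g x : (forall z, 0 <= f z <= 1) -> (forall z, 0 <= g z <= 1) ->
  cont X wb f x -> cont X wb g x -> cont X wb (fun z => f z * g z) x.
Proof. apply (cont_mult01 X le wb); gs. Qed.
Lemma cfsum h M x : (forall m, cont X wb (h m) x) -> cont X wb (fsum X h M) x.
Proof. apply (cont_fsum X le wb); gs. Qed.
Lemma clocal f g x : near X wb (fun z => f z = g z) x -> cont X wb f x -> cont X wb g x.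
Proof. apply (cont_local X le wb); gs. Qed.

Lemma ccon c x : cont X wb (fun _ => c) x.
Proof. apply (cont_const X wb); gs. Qed.

Definition Dn p q x := ury X le wb G3c p q x.
Lemma Dn_01 p q x : 0 <= Dn p q x <= 1. Proof. apply ury_01. Qed.
Lemma Dn_0 p q x : wb p q -> le x p -> Dn p q x = 0.
Proof. apply (ury_0 X le wb); gs. Qed.
Lemma Dn_1 p q x : ~ le x q -> Dn p q x = 1.
Proof. apply ury_1. Qed.
Lemma Dn_cont p q x : wb p q -> cont X wb (Dn p q) x.
Proof. apply (ury_cont X le wb); gs. Qed.

Let le' := fun x y => le y x.
Let wb' := fun x y => wb y x.
Lemma G3f a b : wb' a b -> exists c, wb' a c /\ wb' c b.
Proof. unfold wb'. intros h. destruct (G3c' b a h) as [c [h1 h2]]. exists c; auto. Qed.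

Definition Up p q x := ury X le' wb' G3f p q x.
Lemma Up_01 p q x : 0 <= Up p q x <= 1. Proof. apply ury_01. Qed.
Lemma Up_0 p q x : wb q p -> le p x -> Up p q x = 0.
Proof. intros. apply (ury_0 X le' wb'); unfold le', wb'; auto.
  intros; eapply le_trans; eauto. intros; apply wb_le; auto. intros; eapply wb_le_l; eauto. Qed.
Lemma Up_1 p q x : ~ le q x -> Up p q x = 1.
Proof. intros h. apply (ury_1 X le' wb'). exact h. Qed.

Lemma near_flip P x : near X wb' P x -> near X wb P x.
Proof. intros [a [c [h1 [h2 h3]]]]. exists c, a. unfold wb' in *. split; auto. Qed.

Lemma Up_cont p q x : wb q p -> cont X wb (Up p q) x.
Proof.
  intros h e he. apply near_flip. revert e he. apply (ury_cont X le' wb'); unfold le', wb'; auto.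
  intros; eapply le_trans; eauto. intros; apply wb_le; auto. intros; eapply wb_le_r; eauto.
  intros; eapply wb_le_l; eauto. intros; apply G4c'; auto. intros; apply G8c. intros; apply G7c.
Qed.


Variables (C : X -> Prop) (g : X -> nat).
Hypothesis Hg : forall x y, C x -> C y -> g x = g y -> x = y.
Hypothesis Hd : interval_dense le C.

Lemma dens a b : wb a b -> exists c, C c /\ wb a c /\ wb c b.
Proof.
  intros h. destruct (Hd (interval_oo le a b)) as [c [[h1 h2] h3]].
  - intros x hx. exists a, b. split; auto. intros z hz; auto.
  - destruct (G3c a b h) as [c hc]. exists c; exact hc.
  - exists c; auto.
Qed.

Variable x0 : X.

Lemma cenum_ex m : exists c, (exists c', C c' /\ g c' = m) -> C c /\ g c = m.
Proof. destruct (classic (exists c', C c' /\ g c' = m)) as [[c h]|h]. exists c; auto. exists x0; tauto. Qed.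
Definition cenum m : X := proj1_sig (constructive_indefinite_description _ (cenum_ex m)).
Lemma cenum_g c : C c -> cenum (g c) = c.
Proof.
  intros hc. unfold cenum. destruct constructive_indefinite_description as [c' h]; simpl.
  destruct h as [h1 h2]. exists c; auto. apply Hg; auto.
Qed.

Definition pp m := cenum (fst (Cantor.of_nat m)).
Definition qq m := cenum (snd (Cantor.of_nat m)).
Lemma pq_surj p q : C p -> C q -> exists m, pp m = p /\ qq m = q.
Proof.
  intros hp hq. exists (Cantor.to_nat (g p, g q)). unfold pp, qq. rewrite Cantor.cancel_of_to. simpl.
  rewrite !cenum_g; auto.
Qed.

Definition hD m x := if excluded_middle_informative (wb (pp m) (qq m)) then Dn (pp m) (qq m) x else 0.
Definition hU m x := if excluded_middle_informative (wb (qq m) (pp m)) then Up (pp m) (qq m) x else 0.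

Lemma hD_cont m x : cont X wb (hD m) x.
Proof. unfold hD. destruct excluded_middle_informative. apply Dn_cont; auto. apply ccon. Qed.
Lemma hU_cont m x : cont X wb (hU m) x.
Proof. unfold hU. destruct excluded_middle_informative. apply Up_cont; auto. apply ccon. Qed.
Lemma hD_eq m p q x : pp m = p -> qq m = q -> wb p q -> hD m x = Dn p q x.
Proof. intros; subst. unfold hD. destruct excluded_middle_informative; tauto. Qed.
Lemma hU_eq m p q x : pp m = p -> qq m = q -> wb q p -> hU m x = Up p q x.
Proof. intros; subst. unfold hU. destruct excluded_middle_informative; tauto. Qed.

Definition term m x z := (Rabs (hD m z - hD m x) + Rabs (hU m z - hU m x)) / 2 ^ m.
Definition Sx x N z := fsum X (fun m z => term m x z) N z.
Definition d0 x y := supR (fun r => exists N, r = Sx x N y).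

Lemma term_ge0 m x z : 0 <= term m x z.
Proof. unfold term. pose proof (pow2_pos m). pose proof (Rabs_pos (hD m z - hD m x)). pose proof (Rabs_pos (hU m z - hU m x)).
  apply Rmult_le_pos. lra. left; apply Rinv_0_lt_compat; auto. Qed.

Lemma hD_01 m x : 0 <= hD m x <= 1.
Proof. unfold hD; destruct excluded_middle_informative. apply Dn_01. lra. Qed.
Lemma hU_01 m x : 0 <= hU m x <= 1.
Proof. unfold hU; destruct excluded_middle_informative. apply Up_01. lra. Qed.

Lemma term_le m x z : term m x z <= 2 / 2 ^ m.
Proof.
  unfold term. pose proof (pow2_pos m).
  assert (Rabs (hD m z - hD m x) <= 1). { pose proof (hD_01 m z); pose proof (hD_01 m x). apply Rabs_le; lra. }
  assert (Rabs (hU m z - hU m x) <= 1). { pose proof (hU_01 m z); pose proof (hU_01 m x). apply Rabs_le; lra. }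
  unfold Rdiv. apply Rmult_le_compat_r. left; apply Rinv_0_lt_compat; auto. lra.
Qed.

Lemma Sx_0 x z : Sx x 0 z = 0.
Proof. reflexivity. Qed.
Lemma Sx_S x N z : Sx x (S N) z = Sx x N z + term N x z.
Proof. reflexivity. Qed.

Lemma Sx_ge0 x N z : 0 <= Sx x N z.
Proof. induction N. rewrite Sx_0; lra. rewrite Sx_S. pose proof (term_ge0 N x z). lra. Qed.

Lemma Sx_mono x N k z : Sx x N z <= Sx x (N + k) z.
Proof. induction k. rewrite Nat.add_0_r; lra. rewrite Nat.add_succ_r, Sx_S. pose proof (term_ge0 (N + k) x z). lra. Qed.

Lemma Sx_tail x N k z : Sx x (N + k) z <= Sx x N z + 4 / 2 ^ N - 4 / 2 ^ (N + k).
Proof.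
  induction k. rewrite Nat.add_0_r; lra.
  rewrite Nat.add_succ_r, Sx_S. pose proof (term_le (N + k) x z).
  pose proof (pow2_pos (N + k)).
  assert (4 / 2 ^ S (N + k) = 2 / 2 ^ (N + k)). { simpl. field. lra. }
  assert (4 / 2 ^ (N + k) = 2 * (2 / 2 ^ (N + k))). { field. lra. }
  lra.
Qed.

Lemma Sx_le4 x N z : Sx x N z <= 4.
Proof. pose proof (Sx_tail x 0 N z) as H. rewrite Sx_0, Nat.add_0_l in H. simpl pow in H. pose proof (pow2_pos N). 
  assert (0 <= 4 / 2^N). { apply Rmult_le_pos. lra. left; apply Rinv_0_lt_compat; auto. } lra. Qed.

Lemma Sx_le_d0 x N y : Sx x N y <= d0 x y.
Proof. apply (supR_ub _ _ 4). intros r [N' ->]; apply Sx_le4. exists N; auto. Qed.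

Lemma d0_le x N y : d0 x y <= Sx x N y + 4 / 2 ^ N.
Proof.
  apply (supR_le _ (Sx x 0 y)). 2: exists 0%nat; auto.
  intros r [N' ->]. pose proof (pow2_pos N).
  assert (0 <= 4 / 2^N). { apply Rmult_le_pos. lra. left; apply Rinv_0_lt_compat; auto. }
  destruct (le_lt_dec N' N) as [h|h].
  - replace N with (N' + (N - N'))%nat by lia. pose proof (Sx_mono x N' (N - N') y).
    replace (N' + (N - N'))%nat with N by lia. replace (N' + (N - N'))%nat with N in H1 by lia. lra.
  - replace N' with (N + (N' - N))%nat by lia. pose proof (Sx_tail x N (N' - N) y).
    pose proof (pow2_pos (N + (N' - N))).
    assert (0 <= 4 / 2^(N + (N' - N))). { apply Rmult_le_pos. lra. left; apply Rinv_0_lt_compat; auto. }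
    lra.
Qed.

Lemma d0_ge0 x y : 0 <= d0 x y.
Proof. apply Rle_trans with (Sx x 0 y). rewrite Sx_0; lra. apply Sx_le_d0. Qed.

Lemma term_le_d0 m x y : term m x y <= d0 x y.
Proof. apply Rle_trans with (Sx x (S m) y). rewrite Sx_S. pose proof (Sx_ge0 x m y). lra. apply Sx_le_d0. Qed.

Lemma Sx_refl x N : Sx x N x = 0.
Proof. induction N. auto. rewrite Sx_S, IHN. unfold term. rewrite !Rminus_diag, !Rabs_R0. unfold Rdiv. ring. Qed.

Lemma d0_refl x : d0 x x = 0.
Proof. apply Rle_antisym. apply (supR_le _ 0). intros r [N ->]. rewrite Sx_refl; lra. exists 0%nat; auto. apply d0_ge0. Qed.

Lemma Sx_sym x y N : Sx x N y = Sx y N x.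
Proof. induction N. auto. rewrite !Sx_S, IHN. unfold term. rewrite (Rabs_minus_sym (hD N y)), (Rabs_minus_sym (hU N y)). auto. Qed.

Lemma d0_sym_le x y : d0 x y <= d0 y x.
Proof. apply (supR_le _ 0). intros r [N ->]. rewrite Sx_sym. apply Sx_le_d0. exists 0%nat; auto. Qed.
Lemma d0_sym x y : d0 x y = d0 y x.
Proof. apply Rle_antisym; apply d0_sym_le. Qed.

Lemma term_tri m x y z : term m x z <= term m x y + term m y z.
Proof.
  unfold term. pose proof (pow2_pos m).
  pose proof (Rabs_triang (hD m y - hD m x) (hD m z - hD m y)).
  pose proof (Rabs_triang (hU m y - hU m x) (hU m z - hU m y)).
  replace (hD m y - hD m x + (hD m z - hD m y)) with (hD m z - hD m x) in H0 by ring.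
  replace (hU m y - hU m x + (hU m z - hU m y)) with (hU m z - hU m x) in H1 by ring.
  unfold Rdiv. rewrite <- Rmult_plus_distr_r. apply Rmult_le_compat_r. left; apply Rinv_0_lt_compat; auto. lra.
Qed.

Lemma Sx_tri x y z N : Sx x N z <= Sx x N y + Sx y N z.
Proof. induction N. rewrite !Sx_0; lra. rewrite !Sx_S. pose proof (term_tri N x y z). lra. Qed.

Lemma d0_tri x y z : d0 x z <= d0 x y + d0 y z.
Proof.
  apply (supR_le _ 0). 2: exists 0%nat; auto. intros r [N ->].
  pose proof (Sx_tri x y z N). pose proof (Sx_le_d0 x N y). pose proof (Sx_le_d0 y N z). lra.
Qed.

Lemma Sx_cont x N z : cont X wb (Sx x N) z.
Proof.
  apply cfsum. intros m. unfold term. unfold Rdiv.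
  apply (cont_ext X wb (fun z => / 2 ^ m * (Rabs (hD m z - hD m x) + Rabs (hU m z - hU m x)))).
  intros; ring. apply cont_scal. apply cplus; apply cont_absdiff; [apply hD_cont|apply hU_cont].
Qed.


Definition QA j := cenum (fst (Cantor.of_nat (fst (Cantor.of_nat j)))).
Definition QA' j := cenum (snd (Cantor.of_nat (fst (Cantor.of_nat j)))).
Definition QB' j := cenum (fst (Cantor.of_nat (snd (Cantor.of_nat j)))).
Definition QB j := cenum (snd (Cantor.of_nat (snd (Cantor.of_nat j)))).
Definition valid j := wb (QA j) (QA' j) /\ wb (QB' j) (QB j).

Lemma quad_surj a a' b' b : C a -> C a' -> C b' -> C b ->
  exists j, QA j = a /\ QA' j = a' /\ QB' j = b' /\ QB j = b.
Proof.
  intros. exists (Cantor.to_nat (Cantor.to_nat (g a, g a'), Cantor.to_nat (g b', g b))).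
  unfold QA, QA', QB', QB. rewrite !Cantor.cancel_of_to. cbn [fst snd]. rewrite ?Cantor.cancel_of_to. cbn [fst snd].
  rewrite !cenum_g; auto.
Qed.

Definition chi j x := if excluded_middle_informative (valid j)
  then Rmax (Dn (QB' j) (QB j) x) (Up (QA' j) (QA j) x) else 1.

Lemma chi_01 j x : 0 <= chi j x <= 1.
Proof.
  unfold chi; destruct excluded_middle_informative. 2: lra.
  pose proof (Dn_01 (QB' j) (QB j) x). pose proof (Up_01 (QA' j) (QA j) x).
  unfold Rmax; destruct Rle_dec; lra.
Qed.

Lemma chi_cont j x : cont X wb (chi j) x.
Proof.
  unfold chi; destruct excluded_middle_informative as [[h1 h2]|h]. 2: apply ccon.
  apply cmax. apply Dn_cont; auto. apply Up_cont; auto.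
Qed.

Lemma chi_zero j z : valid j -> le (QA' j) z -> le z (QB' j) -> chi j z = 0.
Proof.
  intros hv h1 h2. unfold chi; destruct excluded_middle_informative; [|tauto].
  destruct hv. rewrite Dn_0, Up_0; auto. unfold Rmax; destruct Rle_dec; auto.
Qed.

Lemma chi_one j z : (valid j -> ~ le (QA j) z \/ ~ le z (QB j)) -> chi j z = 1.
Proof.
  intros h. unfold chi; destruct excluded_middle_informative as [hv|]; auto.
  pose proof (Dn_01 (QB' j) (QB j) z). pose proof (Up_01 (QA' j) (QA j) z).
  destruct (h hv) as [h'|h'].
  - rewrite (Up_1 _ _ _ h'). unfold Rmax; destruct Rle_dec; lra.
  - rewrite (Dn_1 _ _ _ h'). unfold Rmax; destruct Rle_dec; lra.
Qed.

Lemma cover x : exists j, valid j /\ wb (QA' j) x /\ wb x (QB' j).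
Proof.
  destruct (G7c x) as [a0 ha0]. destruct (dens _ _ ha0) as [a' [ca' [_ ha']]].
  destruct (G7c a') as [a1 ha1]. destruct (dens _ _ ha1) as [a [ca [_ ha]]].
  destruct (G8c x) as [b0 hb0]. destruct (dens _ _ hb0) as [b' [cb' [hb' _]]].
  destruct (G8c b') as [b1 hb1]. destruct (dens _ _ hb1) as [b [cb [hb _]]].
  destruct (quad_surj a a' b' b) as [j [e1 [e2 [e3 e4]]]]; auto.
  exists j. unfold valid. rewrite e1, e2, e3, e4. auto.
Qed.

Fixpoint Tp n x := match n with O => chi 0 x | S n => Tp n x * chi (S n) x end.

Lemma Tp_01 n x : 0 <= Tp n x <= 1.
Proof. induction n; simpl. apply chi_01. pose proof (chi_01 (S n) x). split. apply Rmult_le_pos; lra.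
  rewrite <- (Rmult_1_l 1). apply Rmult_le_compat; lra. Qed.

Lemma Tp_cont n x : cont X wb (Tp n) x.
Proof. induction n; simpl. apply chi_cont. apply (cmult (Tp n) (chi (S n))); auto. apply Tp_01. apply chi_01. apply chi_cont. Qed.

Lemma Tp_zero j z : chi j z = 0 -> forall k, Tp (j + k) z = 0.
Proof.
  intros h k. induction k. rewrite Nat.add_0_r. destruct j; simpl; auto. rewrite h; ring.
  rewrite Nat.add_succ_r. simpl. rewrite IHk; ring.
Qed.

Lemma fsum_Tp_stable j z : chi j z = 0 -> forall k, fsum X Tp (j + k) z = fsum X Tp j z.
Proof.
  intros h k. induction k. rewrite Nat.add_0_r; auto.
  rewrite Nat.add_succ_r. simpl. rewrite IHk, Tp_zero; auto. ring.
Qed.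

Lemma fsum_Tp_mono N k z : fsum X Tp N z <= fsum X Tp (N + k) z.
Proof. induction k. rewrite Nat.add_0_r; lra. rewrite Nat.add_succ_r. simpl. pose proof (Tp_01 (N + k) z). lra. Qed.

Lemma fsum_Tp_bound j z N : chi j z = 0 -> fsum X Tp N z <= fsum X Tp j z.
Proof.
  intros h. destruct (le_lt_dec N j) as [l|l].
  - replace j with (N + (j - N))%nat by lia. apply fsum_Tp_mono.
  - replace N with (j + (N - j))%nat by lia. rewrite fsum_Tp_stable; auto. lra.
Qed.

Definition phi x := supR (fun r => exists N, r = fsum X Tp N x).

Lemma phi_eq j z : chi j z = 0 -> phi z = fsum X Tp j z.
Proof.
  intros h. apply Rle_antisym.
  - apply (supR_le _ 0). intros r [N ->]. apply fsum_Tp_bound; auto. exists 0%nat; auto.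
  - apply (supR_ub _ _ (fsum X Tp j z)). intros r [N ->]. apply fsum_Tp_bound; auto. exists j; auto.
Qed.

Lemma chi_zero_near x : exists j, chi j x = 0 /\ near X wb (fun z => chi j z = 0) x.
Proof.
  destruct (cover x) as [j [hv [h1 h2]]]. exists j. split. apply chi_zero; auto; apply wb_le; auto.
  exists (QA' j), (QB' j). split; auto. split; auto. intros z k1 k2. apply chi_zero; auto; apply wb_le; auto.
Qed.

Lemma phi_cont x : cont X wb phi x.
Proof.
  destruct (chi_zero_near x) as [j [_ hn]]. apply (clocal (fsum X Tp j)).
  eapply (near_impl X wb); [|exact hn]. intros z hz. rewrite (phi_eq j z hz); auto.
  apply cfsum. intros; apply Tp_cont.
Qed.

Lemma phi_ge N x : fsum X Tp N x <= phi x.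
Proof.
  destruct (chi_zero_near x) as [j [h _]]. rewrite (phi_eq j x h). apply fsum_Tp_bound; auto.
Qed.

Lemma phi_big M x : (forall k, (k <= M)%nat -> valid k -> ~ le (QA k) x \/ ~ le x (QB k)) -> INR (S M) <= phi x.
Proof.
  intros h. assert (hT : forall n, (n <= M)%nat -> Tp n x = 1).
  { induction n; intros hn; simpl. apply chi_one. apply h; lia.
    rewrite IHn by lia. rewrite chi_one. ring. apply h; auto. }
  assert (forall n, (n <= S M)%nat -> fsum X Tp n x = INR n).
  { induction n; intros hn. auto. simpl fsum. rewrite IHn by lia. rewrite hT by lia. rewrite S_INR. auto. }
  rewrite <- H; auto. apply phi_ge.
Qed.

Lemma phi_ge0 x : 0 <= phi x.
Proof. apply (phi_ge 0 x). Qed.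


Definition dd x y := d0 x y + Rabs (phi x - phi y).

Lemma sep x y : ~ le x y -> exists m, hD m x <> hD m y.
Proof.
  intros h. destruct (G4c' y x h) as [c [hc1 hc2]].
  destruct (dens _ _ hc1) as [q [cq [hq1 hq2]]].
  destruct (dens _ _ hq1) as [p [cp [hp1 hp2]]].
  destruct (pq_surj p q cp cq) as [m [e1 e2]]. exists m.
  rewrite !(hD_eq m p q) by auto.
  assert (Dn p q y = 0) by (apply Dn_0; auto; apply wb_le; auto).
  assert (Dn p q x = 1). { apply Dn_1. intro hx. apply hc2. eapply le_trans; eauto. apply wb_le; auto. }
  rewrite H, H0. intro; lra.
Qed.

Lemma dd_metric : is_metric dd.
Proof.
  unfold dd. split; [|split; [|split]].
  - intros x y. pose proof (d0_ge0 x y). pose proof (Rabs_pos (phi x - phi y)). lra.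
  - intros x y. split.
    + intros h. pose proof (d0_ge0 x y). pose proof (Rabs_pos (phi x - phi y)).
      assert (h0 : d0 x y = 0) by lra.
      assert (hm : forall m, hD m x = hD m y).
      { intros m. pose proof (term_le_d0 m x y). pose proof (term_ge0 m x y).
        assert (term m x y = 0) by lra. unfold term in H3. pose proof (pow2_pos m).
        assert (Rabs (hD m y - hD m x) + Rabs (hU m y - hU m x) = 0).
        { apply (Rmult_eq_reg_r (/ 2^m)). rewrite Rmult_0_l. exact H3. apply Rgt_not_eq, Rinv_0_lt_compat; auto. }
        pose proof (Rabs_pos (hD m y - hD m x)). pose proof (Rabs_pos (hU m y - hU m x)).
        assert (Rabs (hD m y - hD m x) = 0) by lra.
        destruct (Rcase_abs (hD m y - hD m x)). rewrite Rabs_left in H8; lra. rewrite Rabs_right in H8; lra. }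
      apply le_antisym; apply NNPP; intro hn; destruct (sep _ _ hn) as [m hm']; apply hm'; auto.
    + intros ->. rewrite d0_refl, Rminus_diag, Rabs_R0. lra.
  - intros x y. rewrite d0_sym, Rabs_minus_sym. auto.
  - intros x y z. pose proof (d0_tri x y z).
    pose proof (Rabs_triang (phi x - phi y) (phi y - phi z)).
    replace (phi x - phi y + (phi y - phi z)) with (phi x - phi z) in H0 by ring. lra.
Qed.

Lemma dd_ge0 x y : 0 <= dd x y. Proof. apply dd_metric. Qed.
Lemma dd_sym x y : dd x y = dd y x. Proof. apply dd_metric. Qed.
Lemma dd_tri x y z : dd x z <= dd x y + dd y z. Proof. apply dd_metric. Qed.

Lemma iopen_near U : interval_open le U <-> forall x, U x -> near X wb U x.
Proof.
  split.
  - intros h x hx. destruct (h x hx) as [a [b [[h1 h2] h3]]]. exists a, b. split; auto. split; auto.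
    intros z k1 k2. apply h3. split; auto.
  - intros h x hx. destruct (h x hx) as [a [b [h1 [h2 h3]]]]. exists a, b. split. split; auto.
    intros z [k1 k2]; auto.
Qed.

Lemma met_near U : metric_open dd U -> forall x, U x -> near X wb U x.
Proof.
  intros h x hx. destruct (h x hx) as [e [he hb]].
  destruct (small_pow2 (e/6)) as [N hN]. lra.
  pose proof (pow2_pos N).
  assert (4 / 2^N < e / 3). { replace (4 / 2^N) with (2 * (2/2^N)) by (field; lra). lra. }
  eapply (near_impl X wb); [|apply nand; [apply (Sx_cont x N x (e/3))|apply (phi_cont x (e/3))]]; try lra.
  intros z [h1 h2]. apply hb. unfold dd. rewrite Sx_refl, Rminus_0_r in h1.
  pose proof (d0_le x N z). rewrite Rabs_minus_sym.
  pose proof (Sx_ge0 x N z). rewrite Rabs_right in h1 by lra. lra.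
Qed.

Lemma near_met U : (forall x, U x -> near X wb U x) -> metric_open dd U.
Proof.
  intros h x hx. destruct (h x hx) as [a0 [c0 [ha0 [hc0 hUU]]]].
  destruct (dens _ _ hc0) as [q [cq [hq1 hq2]]].
  destruct (dens _ _ hq1) as [p [cp [hp1 hp2]]].
  destruct (pq_surj p q cp cq) as [m1 [e1 e2]].
  destruct (dens _ _ ha0) as [q' [cq' [hq1' hq2']]].
  destruct (dens _ _ hq2') as [p' [cp' [hp1' hp2']]].
  destruct (pq_surj p' q' cp' cq') as [m2 [e1' e2']].
  exists (Rmin (/ 2 ^ m1) (/ 2 ^ m2)). pose proof (pow2_pos m1). pose proof (pow2_pos m2).
  split. apply Rmin_pos; apply Rinv_0_lt_compat; auto.
  intros z hz. pose proof (Rmin_l (/ 2 ^ m1) (/ 2 ^ m2)). pose proof (Rmin_r (/ 2 ^ m1) (/ 2 ^ m2)).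
  assert (hdz : d0 x z < Rmin (/ 2 ^ m1) (/ 2 ^ m2)).
  { unfold dd in hz. pose proof (Rabs_pos (phi x - phi z)). lra. }
  apply hUU.
  -
    pose proof (term_le_d0 m2 x z). unfold term in H3.
    rewrite !(hU_eq m2 p' q') in H3 by auto.
    rewrite (Up_0 p' q' x) in H3 by (auto; apply wb_le; auto).
    assert (Rabs (Up p' q' z - 0) < 1).
    { unfold Rdiv in H3. rewrite Rmult_plus_distr_r in H3.
      assert (0 <= Rabs (hD m2 z - hD m2 x) * / 2 ^ m2). { apply Rmult_le_pos. apply Rabs_pos. left; apply Rinv_0_lt_compat; auto. }
      apply (Rmult_lt_reg_r (/ 2 ^ m2)). apply Rinv_0_lt_compat; auto. rewrite Rmult_1_l. lra. }
    assert (le q' z). { apply NNPP; intro hn. rewrite Up_1 in H4; auto. rewrite Rminus_0_r, Rabs_R1 in H4; lra. }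
    eapply wb_le_r; eauto.
  - pose proof (term_le_d0 m1 x z). unfold term in H3.
    rewrite !(hD_eq m1 p q) in H3 by auto.
    rewrite (Dn_0 p q x) in H3 by (auto; apply wb_le; auto).
    assert (Rabs (Dn p q z - 0) < 1).
    { unfold Rdiv in H3. rewrite Rmult_plus_distr_r in H3.
      assert (0 <= Rabs (hU m1 z - hU m1 x) * / 2 ^ m1). { apply Rmult_le_pos. apply Rabs_pos. left; apply Rinv_0_lt_compat; auto. }
      apply (Rmult_lt_reg_r (/ 2 ^ m1)). apply Rinv_0_lt_compat; auto. rewrite Rmult_1_l. lra. }
    assert (le z q). { apply NNPP; intro hn. rewrite Dn_1 in H4; auto. rewrite Rminus_0_r, Rabs_R1 in H4; lra. }
    eapply wb_le_l; eauto.
Qed.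

Lemma dd_topo U : interval_open le U <-> metric_open dd U.
Proof.
  rewrite iopen_near. split. apply near_met. apply met_near.
Qed.

Lemma ball_open y e : interval_open le (fun z => dd y z < e).
Proof.
  apply dd_topo. intros x hx. exists (e - dd y x). split. lra.
  intros z hz. pose proof (dd_tri y x z). lra.
Qed.


Lemma list_N (u : nat -> X) (l : list (X -> Prop)) :
  (forall V, In V l -> exists N', forall n, (N' <= n)%nat -> ~ V (u n)) ->
  exists N0, forall n, (N0 <= n)%nat -> forall V, In V l -> ~ V (u n).
Proof.
  induction l as [|V l IH]; intros h.
  - exists 0%nat. intros n _ V [].
  - destruct IH as [N1 h1]. intros; apply h; right; auto.
    destruct (h V (or_introl eq_refl)) as [N2 h2].
    exists (max N1 N2). intros n hn W [<-|hW].
    apply h2; lia. apply h1; auto; lia.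
Qed.

Lemma dd_complete : (forall a b, interval_compact le (interval_cc le a b)) -> metric_complete dd.
Proof.
  intros Hc u hu.
  destruct (hu 1) as [N hN]. lra.
  assert (hb : forall n, (N <= n)%nat -> phi (u n) < phi (u N) + 1).
  { intros n hn. pose proof (hN n N hn (le_n N)). unfold dd in H.
    pose proof (d0_ge0 (u n) (u N)).
    assert (phi (u n) - phi (u N) <= Rabs (phi (u n) - phi (u N))) by apply RRle_abs. lra. }
  destruct (floor_dy (phi (u N) + 1) 0) as [M [_ hM]]. pose proof (phi_ge0 (u N)). lra.
  simpl pow in hM. rewrite Rdiv_1_r in hM.
  assert (inK : forall n, (N <= n)%nat -> exists k, (k <= M)%nat /\ valid k /\ le (QA k) (u n) /\ le (u n) (QB k)).
  { intros n hn. apply NNPP. intro hne.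
    assert (INR (S M) <= phi (u n)).
    { apply phi_big. intros k hk hv.
      destruct (classic (le (QA k) (u n))); destruct (classic (le (u n) (QB k))); auto.
      exfalso; apply hne; exists k; auto. }
    pose proof (hb n hn). lra. }
  assert (clu : exists y, forall e, 0 < e -> forall N', exists n, (N' <= n)%nat /\ dd (u n) y < e).
  { apply NNPP. intro H.
    assert (H' : forall y, exists e, 0 < e /\ exists N', forall n, (N' <= n)%nat -> ~ dd (u n) y < e).
    { intros y. apply NNPP. intro hy. apply H. exists y. intros e he N'.
      apply NNPP. intro hn. apply hy. exists e. split; auto. exists N'. intros n hn' hlt. apply hn. exists n; auto. }
    assert (hk : forall k, exists Nk, forall n, (Nk <= n)%nat -> ~ (le (QA k) (u n) /\ le (u n) (QB k))).
    { intros k.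
      destruct (Hc (QA k) (QB k) (fun V => interval_open le V /\ exists N', forall n, (N' <= n)%nat -> ~ V (u n)))
        as [l [hl1 hl2]].
      - intros V [hV _]; auto.
      - intros y _. destruct (H' y) as [e [he [N' hN']]].
        exists (fun z => dd y z < e). split. split. apply ball_open. exists N'. intros n hn. rewrite dd_sym. apply hN'; auto.
        unfold dd. rewrite d0_refl, Rminus_diag, Rabs_R0. lra.
      - destruct (list_N u l) as [N0 h0]. intros V hV. apply (hl1 V hV).
        exists N0. intros n hn hK. destruct (hl2 (u n) hK) as [V [hV1 hV2]]. exact (h0 n hn V hV1 hV2). }
    assert (hall : forall M', exists Ns, forall n, (Ns <= n)%nat -> forall k, (k <= M')%nat -> ~ (le (QA k) (u n) /\ le (u n) (QB k))).
    { induction M'.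
      - destruct (hk 0%nat) as [N0 h0]. exists N0. intros n hn k hk'. replace k with 0%nat by lia. auto.
      - destruct IHM' as [N1 h1]. destruct (hk (S M')) as [N2 h2]. exists (max N1 N2).
        intros n hn k hk'. destruct (Nat.eq_dec k (S M')) as [->|ne]. apply h2; lia. apply h1; lia. }
    destruct (hall M) as [Ns hNs].
    destruct (inK (max N Ns)) as [k [hk1 [hk2 [hk3 hk4]]]]. lia.
    apply (hNs (max N Ns) ltac:(lia) k hk1). auto. }
  destruct clu as [y hy]. exists y. intros e he.
  destruct (hu (e/2)) as [N1 hN1]. lra.
  exists N1. intros n hn.
  destruct (hy (e/2) ltac:(lra) N1) as [m [hm1 hm2]].
  pose proof (hN1 n m hn hm1). pose proof (dd_tri (u n) (u m) y). lra.
Qed.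


Lemma metrizable : (forall a b, interval_compact le (interval_cc le a b)) -> interval_completely_metrizable le.
Proof.
  intros Hc. exists dd. split. apply dd_metric. split. apply dd_topo. apply dd_complete; auto.
Qed.

End Basic.

Section Parts.
Variables (X : Type) (le : X -> X -> Prop).
Hypothesis HP : is_poset le.
Hypothesis HB : bicontinuous le.
Variables (C : X -> Prop) (g : X -> nat).
Hypothesis Hg : forall x y, C x -> C y -> g x = g y -> x = y.
Hypothesis Hd : interval_dense le C.

Ltac dd := eapply dens; eauto.

Lemma part2_down x : exists S, subset S (fun a => ddown le x a /\ C a) /\ directed le S /\ is_sup le S x.
Proof.
  exists (fun a => way_below le a x /\ C a). split; [|split; [split|split]].
  - intros a h; exact h.
  - destruct (G7c X le HB x) as [a ha]. destruct (dens X le HP HB C Hd a x ha) as [c [hc [_ hcx]]]. exists c; auto.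
  - intros a1 a2 [h1 _] [h2 _]. destruct (G5c X le HP HB a1 a2 x h1 h2) as [e [he [k1 k2]]].
    destruct (dens X le HP HB C Hd e x he) as [c [hc [hec hcx]]]. exists c. split; auto.
    split; eapply (le_trans X le HP); eauto; apply (wb_le X le HP); auto.
  - intros a [h _]. apply (wb_le X le HP); auto.
  - intros u hu. apply (down_sup X le HB). intros d hd.
    destruct (dens X le HP HB C Hd d x hd) as [c [hc [hdc hcx]]].
    apply (le_trans X le HP d c u). apply (wb_le X le HP); eauto. apply hu; auto.
Qed.

Lemma part2_up x : exists S, subset S (fun a => uup le x a /\ C a) /\ filtered le S /\ is_inf le S x.
Proof.
  exists (fun a => way_below le x a /\ C a). split; [|split; [split|split]].
  - intros a h; exact h.
  - destruct (G8c X le HB x) as [a ha]. destruct (dens X le HP HB C Hd x a ha) as [c [hc [hxc _]]]. exists c; auto.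
  - intros a1 a2 [h1 _] [h2 _]. destruct (G6c X le HB a1 a2 x h1 h2) as [e [he [k1 k2]]].
    destruct (dens X le HP HB C Hd x e he) as [c [hc [hxc hce]]]. exists c. split; auto.
    split; eapply (le_trans X le HP); eauto; apply (wb_le X le HP); auto.
  - intros a [h _]. apply (wb_le X le HP); auto.
  - intros u hu. apply (up_inf X le HB). intros d hd.
    destruct (dens X le HP HB C Hd x d hd) as [c [hc [hxc hcd]]].
    apply (le_trans X le HP u c d). apply hu; auto. apply (wb_le X le HP); eauto.
Qed.

Definition Bfam := fun U : X -> Prop =>
  exists a b, C a /\ C b /\ way_below le a b /\ U = interval_oo le a b.

Lemma enc_ex (U : X -> Prop) : exists n : nat, Bfam U ->
  exists a b, C a /\ C b /\ U = interval_oo le a b /\ n = Cantor.to_nat (g a, g b).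
Proof.
  destruct (classic (Bfam U)) as [[a [b [ha [hb [_ hU]]]]]|h].
  - exists (Cantor.to_nat (g a, g b)). intros _. exists a, b; auto.
  - exists 0%nat; tauto.
Qed.

Lemma Bfam_countable : countable Bfam.
Proof.
  exists (fun U => proj1_sig (constructive_indefinite_description _ (enc_ex U))).
  intros U V hU hV. destruct constructive_indefinite_description as [n hn].
  destruct constructive_indefinite_description as [n' hn']. simpl. intros <-.
  destruct (hn hU) as [a [b [ha [hb [eU en]]]]]. destruct (hn' hV) as [a' [b' [ha' [hb' [eV en']]]]].
  rewrite en in en'. apply (f_equal Cantor.of_nat) in en'. rewrite !Cantor.cancel_of_to in en'.
  injection en' as e1 e2. apply Hg in e1; auto. apply Hg in e2; auto. subst; auto.
Qed.

Lemma Bfam_basis : is_topological_basis le Bfam.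
Proof.
  split.
  - intros U [a [b [_ [_ [_ ->]]]]] x hx. exists a, b. split; auto. intros z hz; auto.
  - intros U hU x hx. destruct (hU x hx) as [a0 [c0 [[ha0 hc0] hsub]]].
    destruct (dens X le HP HB C Hd x c0 hc0) as [q [cq [hxq hqc]]].
    destruct (dens X le HP HB C Hd a0 x ha0) as [p [cp [hap hpx]]].
    exists (interval_oo le p q). split; [|split].
    + exists p, q. split; auto. split; auto. split; auto. eapply (wb_le_r X le HP); eauto. apply (wb_le X le HP); auto.
    + split; auto.
    + intros z [k1 k2]. apply hsub. split.
      eapply (wb_le_l X le HP); eauto. apply (wb_le X le HP); auto.
      eapply (wb_le_r X le HP); eauto. apply (wb_le X le HP); auto.
Qed.

End Parts.


Theorem mainTheorem2 (X : Type) (le : X -> X -> Prop) (C : X -> Prop) :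
  is_poset le -> bicontinuous le ->
  countable C -> interval_dense le C ->
  (* (i) the intervals (a,b), a,b in C, a << b, form a countable basis *)
  (let B := fun U : X -> Prop =>
       exists a b, C a /\ C b /\ way_below le a b /\ U = interval_oo le a b in
   countable B /\ is_topological_basis le B) /\
  second_countable le /\
  (globally_hyperbolic le -> interval_completely_metrizable le) /\
  (* (ii) *)
  (forall x,
     (exists S, subset S (fun a => ddown le x a /\ C a) /\
                directed le S /\ is_sup le S x) /\
     (exists S, subset S (fun a => uup le x a /\ C a) /\
                filtered le S /\ is_inf le S x)).
Proof.
  intros HP HB [g Hg] Hd.
  split; [|split; [|split]].
  - split. exact (Bfam_countable X le C g Hg). exact (Bfam_basis X le HP HB C Hd).
  - exists (Bfam X le C). split. exact (Bfam_countable X le C g Hg). exact (Bfam_basis X le HP HB C Hd).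
  - intros [_ Hc]. destruct (classic (inhabited X)) as [[x0]|hne].
    + exact (metrizable X le HP HB C g Hg Hd x0 Hc).
    + assert (F : forall x : X, False) by (intros x; apply hne; constructor; exact x).
      exists (fun _ _ => 0%R). split; [|split].
      * split; [|split; [|split]]; intros x; destruct (F x).
      * intros U; split; intros _ x; destruct (F x).
      * intros u _. destruct (F (u 0%nat)).
  - intros x. split. exact (part2_down X le HP HB C Hd x). exact (part2_up X le HP HB C Hd x).
Qed.
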